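(* Let $K$ be a field, $n\ge 1$, and $A,B\in M_n(K)$. Consider the properties: $(\bot)$: $A$ has an eigen-covector $u$ and $B$ has an eigenvector $v$ with $uv=0$. $(\subset)$: $B$ has an eigenvector contained in an $(n-1)$-dimensional $A$-invariant subspace of $K^n$. $(\triangle)$: $n\ge 2$ and there is $P\in GL_n(K)$ with $P^{-1}AP=\begin{pmatrix}A'&*\\0&a\end{pmatrix}$ and $P^{-1}BP=\begin{pmatrix}b&*\\0&B'\end{pmatrix}$, where $a,b\in K$ and $A',B'\in M_{n-1}(K)$. $(<)$: $B$ has an eigenvector $v$ with $\dim K[A]v<n$. $(\top)$: $T(A,B)=0$. Then: (a) $(\bot)\Leftrightarrow(\subset)\Leftrightarrow(\triangle)\Rightarrow(<)\Rightarrow(\top)$. (b) If $K$ contains all eigenvalues of $A$, then $(\bot),(\subset),(\triangle),(<)$ are equivalent. (c) If $K$ contains all eigenvalues of $A$ and of $B$, then all five properties are equivalent.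
   Context: For a commutative ring $R$ with $1$ and $A,B\in M_n(R)$, $M(A,B)\in M_{n^2}(R)$ is the block matrix consisting of $n\times n$ blocks whose $(i,j)$-th block is $A^{j-1}B^{i-1}$ ($i,j=1,\dots,n$), and the (first) triangulant is $T(A,B)=\det M(A,B)$. Vectors are column vectors in $K^n$, covectors are row vectors. An eigenvector of $A$ is a nonzero column vector $v$ with $Av=\lambda v$ for some $\lambda\in K$; an eigen-covector of $A$ is a nonzero row vector $u$ with $uA=\lambda u$ for some $\lambda\in K$. A subspace $V\le K^n$ is $A$-invariant if $AV\subseteq V$. $K[A]$ denotes the unital subalgebra of $M_n(K)$ generated by $A$, so $K[A]v$ is the $A$-invariant subspace generated by $v$. *)

(* Defs.v *)
From HB Require Import structures.
From mathcomp Require Import all_boot all_order all_algebra.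
Set Implicit Arguments. Unset Strict Implicit. Unset Printing Implicit Defensive.
Import GRing.Theory.
Local Open Scope ring_scope.

Definition triangulant_mx (R : comPzRingType) (n : nat) (A B : 'M[R]_n)
  : 'M[R]_(\sum_(i < n) n) :=
  \mxblock_(i < n, j < n) (A ^+ j *m B ^+ i).
Definition triangulant (R : comPzRingType) (n : nat) (A B : 'M[R]_n) : R :=
  \det (triangulant_mx A B).

Section Props.
Variables (K : fieldType) (n : nat).

Definition eigenvec (A : 'M[K]_n) (v : 'cV[K]_n) : Prop :=
  v != 0 /\ exists lam : K, A *m v = lam *: v.
Definition eigencovec (A : 'M[K]_n) (u : 'rV[K]_n) : Prop :=
  u != 0 /\ exists lam : K, u *m A = lam *: u.

Definition invariant_sub (A : 'M[K]_n) (V : {vspace 'cV[K]_n}) : Prop :=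
  forall x, x \in V -> A *m x \in V.

(* K[A]v : the A-invariant subspace generated by v, i.e. span of A^i v.
   The powers A^i with i < n span K[A] (Cayley-Hamilton). *)
Definition KAv (A : 'M[K]_n) (v : 'cV[K]_n) : {vspace 'cV[K]_n} :=
  <<[seq A ^+ i *m v | i <- iota 0 n]>>%VS.

Definition prop_perp (A B : 'M[K]_n) : Prop :=
  exists (u : 'rV[K]_n) (v : 'cV[K]_n),
    eigencovec A u /\ eigenvec B v /\ u *m v = 0.

Definition prop_subset (A B : 'M[K]_n) : Prop :=
  exists (v : 'cV[K]_n) (V : {vspace 'cV[K]_n}),
    eigenvec B v /\ \dim V = n.-1 /\ invariant_sub A V /\ v \in V.

(* P^-1 A P = [A' * ; 0 a]  : last row of P^-1 A P vanishes off the diagonal;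
   P^-1 B P = [b * ; 0 B'] : first column of P^-1 B P vanishes below the
   diagonal. *)
Definition prop_triangle (A B : 'M[K]_n) : Prop :=
  (2 <= n)%N /\ exists P : 'M[K]_n, P \in unitmx /\
    (forall i j : 'I_n, nat_of_ord i = n.-1 -> (nat_of_ord j < n.-1)%N ->
        (invmx P *m A *m P) i j = 0) /\
    (forall i j : 'I_n, nat_of_ord j = 0%N -> (0 < nat_of_ord i)%N ->
        (invmx P *m B *m P) i j = 0).

Definition prop_lt (A B : 'M[K]_n) : Prop :=
  exists v : 'cV[K]_n, eigenvec B v /\ (\dim (KAv A v) < n)%N.

Definition prop_top (A B : 'M[K]_n) : Prop := triangulant A B = 0.

(* K contains all eigenvalues of A: the characteristic polynomial splits *)
Definition splits_in (A : 'M[K]_n) : Prop :=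
  exists s : seq K, char_poly A = \prod_(x <- s) ('X - x%:P).

End Props.

(* Main.v *)
Require Import Defs.
From HB Require Import structures.
From mathcomp Require Import all_boot all_order all_algebra.
From Stdlib Require Import Classical.
Set Implicit Arguments. Unset Strict Implicit. Unset Printing Implicit Defensive.
Import GRing.Theory.
Local Open Scope ring_scope.

Section Aux.
Variable K : fieldType.

Lemma elim_eigen (m n : nat) (C : 'M[K]_n.+1) (P : 'M[K]_(m, n.+1) -> Prop) :
  (forall Y (l : K), P Y -> P (Y *m (C - l%:M))) ->
  forall (s : seq K) Y, P Y -> Y != 0 ->
  Y *m \prod_(l <- s) (C - l%:M) = 0 ->
  exists Z (l : K), [/\ P Z, Z != 0 & Z *m C = l *: Z].
Proof.
move=> HP; elim=> [|l s IH] Y PY Y0.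
  by rewrite big_nil mulmx1 => /eqP; rewrite (negbTE Y0).
rewrite big_cons -mulmxE mulmxA.
have [E|NE] := eqVneq (Y *m (C - l%:M)) 0.
  exists Y, l; split=> //; apply/eqP; rewrite -subr_eq0.
  by rewrite -mul_mx_scalar -mulmxBr -E.
by apply: IH => //; apply: HP.
Qed.

Lemma horner_split (n : nat) (C : 'M[K]_n.+1) (s : seq K) :
  char_poly C = \prod_(x <- s) ('X - x%:P) ->
  \prod_(l <- s) (C - l%:M) = 0.
Proof.
move=> Hc; have := Cayley_Hamilton C; rewrite Hc rmorph_prod => <-.
by apply: eq_bigr => x _; rewrite rmorphB /= horner_mx_X horner_mx_C.
Qed.

Lemma char_poly_tr (n : nat) (C : 'M[K]_n) : char_poly C^T = char_poly C.
Proof.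
rewrite /char_poly -det_tr; congr (\det _).
by apply/matrixP => i j; rewrite !mxE eq_sym.
Qed.

Lemma tr_exp (n : nat) (C : 'M[K]_n.+1) k : (C ^+ k)^T = C^T ^+ k.
Proof.
elim: k => [|k IH]; first by rewrite !expr0 trmx1.
by rewrite exprS -mulmxE trmx_mul IH exprSr mulmxE.
Qed.


Lemma pow_span (n : nat) (C : 'M[K]_n.+1) k :
  exists c : 'I_n.+1 -> K, C ^+ k = \sum_(i < n.+1) c i *: C ^+ i.
Proof.
have Hd : (degree_mxminpoly C <= n.+1)%N.
  have := dvdp_leq (monic_neq0 (char_poly_monic C)) (mxminpoly_dvd_char C).
  by rewrite size_mxminpoly size_char_poly.
have Hm := horner_mx_mem C ('X ^+ k).
have Hs : (powers_mx C (degree_mxminpoly C) <= powers_mx C n.+1)%MS.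
  apply/row_subP => i; rewrite rowK.
  by apply: (eq_row_sub (widen_ord Hd i)); rewrite rowK.
have /submxP [D HD] := submx_trans Hm Hs.
exists (fun i => D 0 i).
rewrite rmorphXn /= horner_mx_X in HD.
apply: (can_inj (@mxvecK _ n.+1 n.+1)).
rewrite HD mulmx_sum_row linear_sum; apply: eq_bigr => i _.
by rewrite linearZ rowK.
Qed.


Lemma nz_row_ex m n (M : 'M[K]_(m, n)) : M != 0 -> exists i, row i M != 0.
Proof.
move=> HM; apply/existsP; apply: contraR HM; rewrite negb_exists => /forallP H.
by apply/eqP/row_matrixP => i; rewrite row0; apply/eqP; move: (H i); rewrite negbK.
Qed.

Lemma col_mulmx m n p (M : 'M[K]_(m, n)) (N : 'M[K]_(n, p)) j :
  col j (M *m N) = M *m col j N.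
Proof. by rewrite !colE mulmxA. Qed.

Lemma ann_ex n (V : {vspace 'cV[K]_n}) : (\dim V < n)%N ->
  exists u : 'rV[K]_n, u != 0 /\ forall x, x \in V -> u *m x = 0.
Proof.
move=> Hd.
pose S : 'M[K]_(n, \dim V) := \matrix_(i, j) ((vbasis V)`_j) i 0.
have HS : forall j, col j S = (vbasis V)`_j.
  by move=> j; apply/matrixP => i k; rewrite !mxE ord1.
have Hr : (0 < \rank (kermx S))%N.
  by rewrite mxrank_ker subn_gt0 (leq_ltn_trans (rank_leq_col S)).
have /nz_row_ex [i Hi] : kermx S != 0 by rewrite -mxrank_eq0 -lt0n.
exists (row i (kermx S)); split => // x Hx.
have /sub_kermxP HK := row_sub i (kermx S).
rewrite (coord_vbasis Hx) mulmx_sumr big1 // => j _.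
by rewrite -scalemxAr -HS -col_mulmx HK col0 scaler0.
Qed.

Lemma scal_entry n (u : 'rV[K]_n) k : u *m delta_mx k 0 = (u 0 k)%:M.
Proof.
apply/matrixP => a b; rewrite !ord1 !mxE (bigD1 k) //= big1 ?addr0.
  by rewrite !mxE !eqxx mulr1 mulr1n.
by move=> j Hj; rewrite !mxE (negbTE Hj) mulr0.
Qed.

Lemma functional_mult n (u w : 'rV[K]_n) : u != 0 ->
  (forall x : 'cV[K]_n, u *m x = 0 -> w *m x = 0) -> exists l : K, w = l *: u.
Proof.
move=> Hu H.
have [j Hj] : exists j, u 0 j != 0.
  apply/existsP; apply: contraR Hu; rewrite negb_exists => /forallP Hc.
  by apply/eqP/rowP => k; rewrite mxE; apply/eqP; move: (Hc k); rewrite negbK.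
exists (w 0 j / u 0 j); apply/rowP => k; rewrite mxE.
pose x : 'cV[K]_n := delta_mx k 0 - (u 0 k / u 0 j) *: delta_mx j 0.
have Hx : u *m x = 0.
  rewrite /x mulmxBr -scalemxAr !scal_entry.
  by apply/matrixP => a b; rewrite !ord1 !mxE /= !mulr1n divfK // subrr.
have := H x Hx; rewrite /x mulmxBr -scalemxAr !scal_entry.
move/matrixP/(_ 0 0); rewrite !mxE /= !mulr1n => /eqP; rewrite subr_eq0 => /eqP ->.
by rewrite mulrAC [RHS]mulrC mulrA.
Qed.


Definition kerv n (u : 'rV[K]_n) : {vspace 'cV[K]_n} :=
  lker (linfun (mulmx u : 'cV[K]_n -> 'M[K]_1)).

Lemma mem_kerv n (u : 'rV[K]_n) x : (x \in kerv u) = (u *m x == 0).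
Proof. by rewrite memv_ker lfunE. Qed.

Lemma dim_kerv n (u : 'rV[K]_n) : u != 0 -> \dim (kerv u) = n.-1.
Proof.
move=> Hu.
have [j Hj] : exists j, u 0 j != 0.
  apply/existsP; apply: contraR Hu; rewrite negb_exists => /forallP Hc.
  by apply/eqP/rowP => k; rewrite mxE; apply/eqP; move: (Hc k); rewrite negbK.
have := limg_ker_dim (linfun (mulmx u : 'cV[K]_n -> 'M[K]_1)) fullv.
rewrite capfv dimvf dim_matrix ?muln1 ?mulr1.
have -> : \dim (limg (linfun (mulmx u : 'cV[K]_n -> 'M[K]_1))) = 1%N.
  apply/eqP; rewrite eqn_leq; apply/andP; split.
    by rewrite (leq_trans (dimvS (subvf _))) // dimvf dim_matrix.
  rewrite lt0n dimv_eq0; apply/negP => /eqP H0.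
  have := memv_img (linfun (mulmx u : 'cV[K]_n -> 'M[K]_1)) (memvf (delta_mx j 0 : 'cV[K]_n)).
  rewrite H0 memv0 lfunE /= scal_entry => /eqP /matrixP /(_ 0 0).
  by rewrite !mxE /= mulr1n; apply/eqP.
by rewrite /kerv addn1 => /(congr1 predn).
Qed.


Lemma pow_eig n (A : 'M[K]_n) (u : 'rV[K]_n) l k :
  u *m A = l *: u -> u *m A ^+ k = l ^+ k *: u.
Proof.
move=> H; elim: k => [|k IH]; first by rewrite !expr0 mulmx1 scale1r.
case: n A u H IH => [|n] A u H IH; first by rewrite !thinmx0 -/(thinmx0 _) ?flatmx0; apply/rowP => [[]].
by rewrite exprSr -mulmxE mulmxA IH -scalemxAl H scalerA -exprSr.
Qed.

Lemma perp_subset n (A B : 'M[K]_n) : prop_perp A B -> prop_subset A B.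
Proof.
move=> [u [v [[u0 [l Hu]] [Hv uv]]]].
exists v, (kerv u); split => //; split; first exact: dim_kerv.
split; last by rewrite mem_kerv uv.
move=> x; rewrite !mem_kerv mulmxA Hu -scalemxAl => /eqP ->.
by rewrite scaler0.
Qed.

Lemma subset_perp n (A B : 'M[K]_n) : (0 < n)%N -> prop_subset A B -> prop_perp A B.
Proof.
move=> n0 [v [V [Hv [dV [HA vV]]]]].
have := @ann_ex n V; rewrite dV ltn_predL => /(_ n0) [u [u0 Hu]].
have VK : (V <= kerv u)%VS by apply/subvP => x Hx; rewrite mem_kerv Hu.
have /eqP EV : V == kerv u by rewrite eqEdim VK (dim_kerv u0) dV leqnn.
have [l Hl] : exists l : K, u *m A = l *: u.
  apply: functional_mult => // x Hx.
  have : x \in V by rewrite EV mem_kerv Hx.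
  by move/HA/Hu; rewrite mulmxA.
by exists u, v; split; [split => //; exists l | split => //; apply: Hu].
Qed.

Lemma perp_lt n (A B : 'M[K]_n) : (0 < n)%N -> prop_perp A B -> prop_lt A B.
Proof.
move=> n0 [u [v [[u0 [l Hu]] [Hv uv]]]]; exists v; split => //.
have : (KAv A v <= kerv u)%VS.
  apply/span_subvP => y /mapP [i _ ->]; rewrite mem_kerv mulmxA (pow_eig _ Hu).
  by rewrite -scalemxAl uv scaler0.
move/dimvS; rewrite dim_kerv // => H; apply: (leq_ltn_trans H).
by rewrite ltn_predL.
Qed.

Lemma triangle_perp n (A B : 'M[K]_n) : prop_triangle A B -> prop_perp A B.
Proof.
move=> [n2 [P [PU [H1 H2]]]].
have n1 : (n.-1 < n)%N by rewrite ltn_predL (leq_trans _ n2).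
have n0 : (0 < n)%N by rewrite (leq_trans _ n2).
pose l := Ordinal n1; pose o := Ordinal n0.
set Q := invmx P *m A *m P in H1; set Q' := invmx P *m B *m P in H2.
have C1 : (delta_mx 0 l : 'rV[K]_n) *m Q = Q l l *: delta_mx 0 l.
  apply/rowP => k; rewrite -rowE [LHS]mxE [RHS]mxE [delta_mx _ _ _ _]mxE eqxx /=.
  have [->|kl] := eqVneq k l; first by rewrite mulr1.
  rewrite mulr0 H1 //; rewrite ltn_neqAle -ltnS prednK // ltn_ord andbT.
  by apply: contra kl => /eqP E; apply/eqP/val_inj.
have C2 : Q' *m (delta_mx o 0 : 'cV[K]_n) = Q' o o *: delta_mx o 0.
  apply/colP => k; rewrite -colE [LHS]mxE [RHS]mxE [delta_mx _ _ _ _]mxE eqxx /=.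
  have [->|ko] := eqVneq k o; first by rewrite mulr1.
  rewrite mulr0 H2 //; rewrite lt0n; apply: contra ko => /eqP E.
  by apply/eqP; apply: val_inj.
exists ((delta_mx 0 l : 'rV[K]_n) *m invmx P), (P *m (delta_mx o 0 : 'cV[K]_n)).
split; [split|split; [split|]].
- apply: contraTneq isT => E.
  have : (delta_mx 0 l : 'rV[K]_n) *m invmx P *m P = 0 by rewrite E mul0mx.
  rewrite mulmxKV // => /matrixP /(_ 0 l); rewrite !mxE !eqxx /=.
  by move/eqP; rewrite oner_eq0.
- exists (Q l l); rewrite -mulmxA -[invmx P *m A](mulmxK PU) -/Q.
  by rewrite mulmxA C1 scalemxAl.
- apply: contraTneq isT => E.
  have : invmx P *m (P *m (delta_mx o 0 : 'cV[K]_n)) = 0 by rewrite E mulmx0.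
  rewrite mulKmx // => /matrixP /(_ o 0); rewrite !mxE !eqxx /=.
  by move/eqP; rewrite oner_eq0.
- exists (Q' o o); rewrite mulmxA -[B *m P](mulKVmx PU) -mulmxA -/Q'.
  by rewrite [invmx P *m (B *m P)]mulmxA -/Q' C2 scalemxAr.
- rewrite mulmxA -(mulmxA _ (invmx P)) mulVmx // mulmx1.
  apply/matrixP => a b; rewrite !ord1 !mxE (bigD1 l) //= big1.
    rewrite !mxE !eqxx /= addr0.
    have -> : (l == o) = false.
      by apply/negbTE/eqP => /(congr1 val) /=; rewrite -(subnK n2) addn2.
    by rewrite mulr0.
  by move=> k kl; rewrite !mxE (negbTE kl) andbF mul0r.
Qed.


Lemma unit_of_free n (s : seq 'cV[K]_n) (Hs : size s = n) : free s ->
  (\matrix_(i, j) (s`_j) i 0 : 'M[K]_n) \in unitmx.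
Proof.
move=> Hf; set P := \matrix_(i, j) _.
pose t := @Tuple n _ s (introT eqP Hs).
have Ht : free t by [].
rewrite unitmxE unitfE; apply/negP => /eqP D0.
have : \det P^T == 0 by rewrite det_tr D0.
case/det0P => y y0 Hy.
have E : \sum_(j < n) y 0 j *: t`_j = 0.
  apply/matrixP => i k; rewrite ord1 summxE [RHS]mxE.
  move/matrixP: Hy => /(_ 0 i); rewrite [RHS]mxE mxE => E'; rewrite -[in RHS]E'.
  by apply: eq_bigr => j _; rewrite !mxE.
have Hk := (freeP Ht) (fun j => y 0 j) E.
by case/eqP: y0; apply/rowP => j; rewrite mxE Hk.
Qed.


Lemma perp_triangle n (A B : 'M[K]_n) : prop_perp A B -> prop_triangle A B.
Proof.
move=> [u [v [[u0 [lam Hu]] [[v0 [mu Hv]] uv]]]].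
pose W := kerv u.
have dW : \dim W = n.-1 := dim_kerv u0.
have vW : v \in W by rewrite mem_kerv uv.
have n2 : (1 < n)%N.
  have : (\dim <[v]> <= \dim W)%N by apply: dimvS; rewrite -memvE.
  rewrite dW dim_vline v0; case: n {A B u v u0 Hu Hv uv W dW vW v0} => [|[|n]] //.
have [jz Hjz] : exists j, u 0 j != 0.
  apply/existsP; apply: contraR u0; rewrite negb_exists => /forallP Hc.
  by apply/eqP/rowP => k; rewrite mxE; apply/eqP; move: (Hc k); rewrite negbK.
pose z : 'cV[K]_n := delta_mx jz 0.
have zW : z \notin W by rewrite mem_kerv /z scal_entry; apply: contra Hjz => /eqP/matrixP/(_ 0 0); rewrite !mxE /= mulr1n => ->.
pose D := (W :\: <[v]>)%VS.
pose b := vbasis D.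
have WD : (D + <[v]> = W)%VS by rewrite /D addv_diff; apply/addv_idPl; rewrite -memvE.
have dD : (\dim D).+1 = n.-1.
  move: WD; move/(congr1 (@dimv _ _)); rewrite dimv_disjoint_sum ?capv_diff // dim_vline v0 dW addn1.
  by [].
pose s := v :: (b ++ [:: z]).
have Hs : size s = n by rewrite /s /= size_cat size_tuple /= addn1 dD prednK // (ltn_trans _ n2).
have spanW : (W <= <<s>>)%VS.
  rewrite /s span_cons span_cat (span_basis (vbasisP D)) -/D.
  rewrite -{1}WD subv_add addvSl andbT.
  exact: subv_trans (addvSl D _) (addvSr _ _).
have Hfree : free s.
  rewrite /free Hs eqn_leq; apply/andP; split.
    by apply: leq_trans (dimvS (subvf _)) _; rewrite dimvf dim_matrix mulr1.
  have HWs : (W + <[z]> <= <<s>>)%VS.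
    rewrite subv_add spanW /= -memvE; apply: memv_span; rewrite /s !inE mem_cat inE eqxx.
    by rewrite !orbT.
  apply: leq_trans (dimvS HWs).
  have H1 : (W <= W + <[z]>)%VS := addvSl _ _.
  have n0 : (0 < n)%N by rewrite (ltn_trans _ n2).
  rewrite -{1}(prednK n0) -dW (ltn_leqif (dimv_leqif_eq H1)).
  by apply: contra zW => /eqP E; rewrite E memvE addvSr.
have n0 : (0 < n)%N by rewrite (ltn_trans _ n2).
pose P : 'M[K]_n := \matrix_(i, j) (s`_j) i 0.
have PU : P \in unitmx := unit_of_free Hs Hfree.
have sW : forall k : 'I_n, (k < n.-1)%N -> s`_k \in W.
  move=> [[|k] Hk] /= Hk1; first by [].
  rewrite /s /= nth_cat size_tuple.
  have Hk' : (k < \dim D)%N by rewrite -ltnS dD.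
  rewrite Hk'; apply: (subvP (diffvSl W <[v]>)); apply: vbasis_mem.
  by apply: mem_nth; rewrite size_tuple.
split => //; exists P; split => //; split.
- move=> i j Hi Hj; set Q := invmx P *m A *m P.
  pose r := u *m P.
  have Hr : forall k : 'I_n, (k < n.-1)%N -> r 0 k = 0.
    move=> k Hk; have := sW k Hk; rewrite mem_kerv => /eqP /matrixP /(_ 0 0).
    rewrite !mxE => E; rewrite -[RHS]E; apply: eq_bigr => m _; rewrite !mxE.
    by [].
  have Hne : forall k : 'I_n, k != i -> (k < n.-1)%N.
    move=> k Hk; rewrite ltn_neqAle -ltnS prednK // ltn_ord andbT.
    by apply: contra Hk => /eqP E; apply/eqP/val_inj; rewrite /= E Hi.
  have ri : r 0 i != 0.
    apply: contra u0 => /eqP ri.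
    have : r = 0.
      apply/rowP => k; rewrite [RHS]mxE; have [->|Hk] := eqVneq k i; first by [].
      exact: Hr (Hne _ Hk).
    by move=> r0; rewrite -(mulmxK PU u) -/r r0 mul0mx.
  have rQ : r *m Q = lam *: r.
    by rewrite /r /Q !mulmxA mulmxK // Hu scalemxAl.
  move/matrixP: rQ => /(_ 0 j); rewrite mxE [(lam *: r) 0 j]mxE (Hr j Hj) mulr0 (bigD1 i) //= big1.
    by rewrite addr0 => /eqP; rewrite mulf_eq0 (negbTE ri) /= => /eqP.
  by move=> k Hk; rewrite (Hr k (Hne _ Hk)) mul0r.
- move=> i j Hj Hi.
  have Pv : P *m (delta_mx j 0 : 'cV[K]_n) = v.
    apply/colP => k; rewrite -colE !mxE Hj; by [].
  have -> : (invmx P *m B *m P) i j = ((invmx P *m B *m P) *m (delta_mx j 0 : 'cV[K]_n)) i 0.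
    by rewrite -colE [RHS]mxE.
  rewrite -mulmxA Pv -mulmxA Hv -scalemxAr -{1}Pv mulKmx // !mxE.
  have -> : (i == j) = false by apply/negbTE; apply: contraTneq Hi => ->; rewrite Hj.
  by rewrite andFb mulr0.
Qed.


Lemma pow_eigc n (B : 'M[K]_n) (v : 'cV[K]_n) l k :
  B *m v = l *: v -> B ^+ k *m v = l ^+ k *: v.
Proof.
move=> H; elim: k => [|k IH].
  case: n B v H => [|n] B v H; first by rewrite !thinmx0 -/(thinmx0 _); apply/colP => [[]].
  by rewrite !expr0 mul1mx scale1r.
case: n B v H IH => [|n] B v H IH; first by apply/colP => [[]].
by rewrite exprS -mulmxE -mulmxA IH -scalemxAr H scalerA -exprSr.
Qed.

Lemma dep_of_dim n (C : 'M[K]_n) (x : 'cV[K]_n) : (\dim (KAv C x) < n)%N ->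
  exists k : 'I_n -> K, (exists i, k i != 0) /\
    \sum_(i < n) k i *: (C ^+ i *m x) = 0.
Proof.
move=> Hd.
pose s := [seq C ^+ i *m x | i <- iota 0 n].
have Hs : size s = n by rewrite size_map size_iota.
pose t := @Tuple n _ s (introT eqP Hs).
have Hnf : ~~ free t.
  by rewrite /free /= -/s Hs /KAv -/s; apply/negP => /eqP E; move: Hd; rewrite E ltnn.
have Ht : forall i : 'I_n, t`_i = C ^+ i *m x.
  by move=> i; rewrite /= /s (nth_map 0%N) ?size_iota // nth_iota.
case: (@freeP _ _ n t) Hnf => // Hn _.
apply: NNPP => Hc; apply: Hn => k Hk i.
apply: NNPP => Hki; apply: Hc; exists k; split; first by exists i; apply/eqP.
by rewrite -[RHS]Hk; apply: eq_bigr => j _; rewrite Ht.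
Qed.

Lemma dim_of_dep n (C : 'M[K]_n) (x : 'cV[K]_n) (k : 'I_n -> K) :
  (exists i, k i != 0) -> \sum_(i < n) k i *: (C ^+ i *m x) = 0 ->
  (\dim (KAv C x) < n)%N.
Proof.
move=> [i ki] Hk.
pose s := [seq C ^+ i *m x | i <- iota 0 n].
have Hs : size s = n by rewrite size_map size_iota.
pose t := @Tuple n _ s (introT eqP Hs).
have Ht : forall i : 'I_n, t`_i = C ^+ i *m x.
  by move=> j; rewrite /= /s (nth_map 0%N) ?size_iota // nth_iota.
have Hnf : ~~ free t.
  apply/negP => /freeP Hf; move: ki; rewrite (Hf k) ?eqxx //.
  by rewrite -[RHS]Hk; apply: eq_bigr => j _; rewrite Ht.
rewrite ltn_neqAle; apply/andP; split.
  by move: Hnf; rewrite /free /= -/s Hs /KAv -/s.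
by rewrite /KAv -/s; apply: leq_trans (dim_span s) _; rewrite Hs.
Qed.

Lemma lt_top n (A B : 'M[K]_n) : prop_lt A B -> prop_top A B.
Proof.
move=> [v [[v0 [mu Hv]] Hd]].
have [k [[i0 ki0] Hk]] := dep_of_dim Hd.
pose w : 'cV[K]_(\sum_(i < n) n) := \mxcol_j (k j *: v).
have Mw : triangulant_mx A B *m w = 0.
  rewrite /triangulant_mx /w mul_mxblock_mxrow -(mxcol0 (p_ := fun _ : 'I_n => n)).
  apply: eq_mxcol => i.
  under eq_bigr do rewrite -mulmxA -scalemxAr (pow_eigc i Hv) scalerA -scalemxAr mulrC -scalerA.
  by rewrite -scaler_sumr Hk scaler0.
have w0 : w != 0.
  apply/negP => /eqP w0; move: (mxcolK (fun j => k j *: v) i0); rewrite -/w w0.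
  by rewrite submxcol0 => /esym/eqP; rewrite scaler_eq0 (negbTE ki0) (negbTE v0).
apply/eqP; apply: contraTT w0 => HM; rewrite negbK.
have HU : triangulant_mx A B \in unitmx by rewrite unitmxE unitfE.
by rewrite -(mulKmx HU w) Mw mulmx0.
Qed.


Lemma krylov_ann n (C : 'M[K]_n.+1) (x : 'cV[K]_n.+1) :
  splits_in C -> (\dim (KAv C x) < n.+1)%N ->
  exists u : 'rV[K]_n.+1, eigencovec C u /\ u *m x = 0.
Proof.
move=> [s Hs] Hd.
have [u0 [u00 Hu0]] := ann_ex Hd.
have Hall : forall k, u0 *m (C ^+ k *m x) = 0.
  move=> k; have [c ->] := pow_span C k.
  rewrite mulmx_suml mulmx_sumr big1 // => i _.
  rewrite -scalemxAl -scalemxAr Hu0 ?scaler0 //.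
  by apply: memv_span; apply: (map_f (fun i => C ^+ i *m x)); rewrite mem_iota /= add0n ltn_ord.
pose P := fun Y : 'rV[K]_n.+1 => forall k, Y *m (C ^+ k *m x) = 0.
have HP : forall Y l, P Y -> P (Y *m (C - l%:M)).
  move=> Y l HY k; rewrite -mulmxA mulmxBl mul_scalar_mx mulmxBr -scalemxAr HY scaler0 subr0.
  by rewrite [C *m _]mulmxA -[C *m C ^+ k]/(C * C ^+ k) -exprS HY.
have [Z [l [PZ Z0 HZ]]] := elim_eigen HP Hall u00 (etrans (congr1 (mulmx u0) (horner_split Hs)) (mulmx0 _ _)).
exists Z; split; first by split => //; exists l.
by have := PZ 0%N; rewrite expr0 mul1mx.
Qed.

Lemma lt_perp n (A B : 'M[K]_n.+1) : splits_in A -> prop_lt A B -> prop_perp A B.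
Proof.
move=> HA [v [Hv Hd]].
have [u [Hu uv]] := krylov_ann HA Hd.
by exists u, v.
Qed.


Lemma rowZ_ m n (Z : 'M[K]_(m, n)) (l : K) i : row i (l *: Z) = l *: row i Z.
Proof. by apply/rowP => k; rewrite !mxE. Qed.

Lemma eigvec_ex n (B : 'M[K]_n.+1) : splits_in B ->
  exists v : 'cV[K]_n.+1, eigenvec B v.
Proof.
move=> [s Hs].
have Hs' : char_poly B^T = \prod_(x <- s) ('X - x%:P) by rewrite char_poly_tr.
have HP : forall (Y : 'M[K]_n.+1) (l : K), True -> True by [].
have [Z [l [_ Z0 HZ]]] := elim_eigen HP (s := s) (Y := 1%:M) I (oner_neq0 _)
  (etrans (congr1 (mulmx 1%:M) (horner_split Hs')) (mulmx0 _ _)).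
have [i Hi] := nz_row_ex Z0.
exists (row i Z)^T; split; first by rewrite trmx_eq0.
exists l; apply: trmx_inj; rewrite trmx_mul trmxK linearZ /= trmxK.
by rewrite -row_mul HZ rowZ_.
Qed.

Lemma top_kernel n (A B : 'M[K]_n.+1) : prop_top A B ->
  exists Y : 'M[K]_n.+1, Y != 0 /\
    forall k : nat, \sum_(i < n.+1) row i Y *m (A ^+ k *m B ^+ i) = 0.
Proof.
move=> /eqP /det0P [y y0 Hy].
pose Y : 'M[K]_n.+1 := \matrix_(i, k) (submxrow y i) 0 k.
have HY : forall i, row i Y = submxrow y i by move=> i; apply/rowP => k; rewrite !mxE.
have H0 : forall j : 'I_n.+1, \sum_(i < n.+1) row i Y *m (A ^+ j *m B ^+ i) = 0.
  move=> j; move: Hy; rewrite -(submxrowK y) /triangulant_mx mul_mxrow_mxblock.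
  move/(congr1 (fun M => submxrow M j)); rewrite mxrowK submxrow0 => E; rewrite -[RHS]E.
  by apply: eq_bigr => i _; rewrite HY.
exists Y; split.
  apply: contra y0 => /eqP Y0; apply/eqP; rewrite -(submxrowK y).
  rewrite -(mxrow0 (q_ := fun _ : 'I_n.+1 => n.+1)); apply: eq_mxrow => i.
  by rewrite -HY Y0 row0.
move=> k; have [c ->] := pow_span A k.
under eq_bigr do rewrite mulmx_suml mulmx_sumr.
rewrite exchange_big big1 // => j _.
under eq_bigr do rewrite -scalemxAl -scalemxAr.
by rewrite -scaler_sumr H0 scaler0.
Qed.


Lemma nz_entry n (u : 'rV[K]_n) : u != 0 -> exists j, u 0 j != 0.
Proof.
move=> Hu; apply/existsP; apply: contraR Hu; rewrite negb_exists => /forallP Hc.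
by apply/eqP/rowP => k; rewrite [RHS]mxE; apply/eqP; move: (Hc k); rewrite negbK.
Qed.

Lemma top_perp n (A B : 'M[K]_n.+1) : splits_in A -> splits_in B ->
  prop_top A B -> prop_perp A B.
Proof.
move=> [sA HsA] HB /top_kernel [Y [Y0 HY]].
pose G := fun Y : 'M[K]_n.+1 => forall k : nat,
  \sum_(i < n.+1) row i Y *m (A ^+ k *m B ^+ i) = 0.
have HG : forall Y l, G Y -> G (Y *m (A - l%:M)).
  move=> Y' l HY' k.
  have E : forall i : 'I_n.+1, (A - l%:M) *m (A ^+ k *m B ^+ i) =
      A ^+ k.+1 *m B ^+ i - l *: (A ^+ k *m B ^+ i).
    move=> i; rewrite mulmxBl mul_scalar_mx mulmxA.
    by rewrite -[A *m A ^+ k]/(A * A ^+ k) -exprS.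
  under eq_bigr do rewrite row_mul -mulmxA E mulmxBr -scalemxAr.
  by rewrite sumrB -scaler_sumr !HY' scaler0 subr0.
have [Z [lam [GZ Z0 HZ]]] := elim_eigen HG (s := sA) HY Y0
  (etrans (congr1 (mulmx Y) (horner_split HsA)) (mulmx0 _ _)).
have Hrow : forall i, row i Z *m A = lam *: row i Z by move=> i; rewrite -row_mul HZ rowZ_.
have HZ0 : \sum_(i < n.+1) row i Z *m B ^+ i = 0.
  by rewrite -[RHS](GZ 0%N); apply: eq_bigr => i _; rewrite expr0 mul1mx.
have [i0 Hi0] := nz_row_ex Z0.
set z := row i0 Z in Hi0.
have [j0 Hj0] := nz_entry Hi0.
have [v0 [v00 [mu Hv0]]] := eigvec_ex HB.
case: (classic (forall i, exists c : K, row i Z = c *: z)) => [Hall|Hex].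
- pose c := fun i : 'I_n.+1 => row i Z 0 j0 / z 0 j0.
  have Hc : forall i, row i Z = c i *: z.
    move=> i; have [d Hd] := Hall i; rewrite /c Hd mxE mulfK //.
  have Hd : (\dim (KAv B^T z^T) < n.+1)%N.
    apply: (dim_of_dep (k := c)).
      by exists i0; rewrite /c -/z mulfV // oner_neq0.
    transitivity (\sum_(i < n.+1) row i Z *m B ^+ i)^T; last by rewrite HZ0 trmx0.
    rewrite linear_sum; apply: eq_bigr => i _ /=.
    by rewrite trmx_mul tr_exp Hc linearZ /= -scalemxAr.
  have HBt : splits_in B^T by case: HB => s Hs; exists s; rewrite char_poly_tr.
  have [u' [[u'0 [m Hu']] Hu'z]] := krylov_ann HBt Hd.
  exists z, u'^T; split; first by split => //; exists lam; exact: Hrow.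
  split.
    split; first by rewrite trmx_eq0.
    exists m; apply: trmx_inj; rewrite trmx_mul !trmxK linearZ /= trmxK //.
  by apply: trmx_inj; rewrite trmx_mul trmxK Hu'z trmx0.
- have [i Hi] : exists i, forall c : K, row i Z != c *: z.
    apply: NNPP => Hn; apply: Hex => i; apply: NNPP => Hc; apply: Hn.
    exists i => c; apply/negP => /eqP E; apply: Hc; by exists c.
  set w := row i Z in Hi.
  pose a := (z *m v0) 0 0; pose b := (w *m v0) 0 0.
  have Ez : z *m v0 = a%:M by apply/matrixP => p q; rewrite !ord1 [RHS]mxE /= mulr1n.
  have Ew : w *m v0 = b%:M by apply/matrixP => p q; rewrite !ord1 [RHS]mxE /= mulr1n.
  have [a0|a0] := eqVneq a 0.
    exists z, v0; split; first by split => //; exists lam; exact: Hrow.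
    by split; [split => //; exists mu | rewrite Ez a0; apply/matrixP => p q; rewrite !mxE mul0rn].
  exists (a *: w - b *: z), v0; split.
    split.
      apply/negP; rewrite subr_eq0 => /eqP E; have := Hi (b / a).
      by rewrite -[w](scalerK a0) E scalerA mulrC eqxx.
    by exists lam; rewrite mulmxBl -!scalemxAl Hrow (Hrow i0) scalerBr !scalerA (mulrC a) (mulrC b).
  split; first by split => //; exists mu.
  by rewrite mulmxBl -!scalemxAl Ez Ew; apply/matrixP => p q; rewrite !mxE mulrnAr mulrnAr mulrC subrr.
Qed.

End Aux.

Theorem theorem1 (K : fieldType) (n : nat) (A B : 'M[K]_n) :
  (0 < n)%N ->
  ((prop_perp A B <-> prop_subset A B) /\
   (prop_subset A B <-> prop_triangle A B) /\
   (prop_triangle A B -> prop_lt A B) /\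
   (prop_lt A B -> prop_top A B)) /\
  (splits_in A ->
   (prop_perp A B <-> prop_lt A B)) /\
  (splits_in A -> splits_in B ->
   (prop_perp A B <-> prop_top A B)).
Proof.
case: n A B => [|n] A B // _.
have n0 : (0 < n.+1)%N by [].
split; [split; [|split; [|split]]|split].
- by split; [apply: perp_subset | apply: subset_perp].
- split; first by move=> H; apply: perp_triangle; apply: subset_perp.
  by move=> H; apply: perp_subset; apply: triangle_perp.
- by move=> H; apply: perp_lt => //; apply: triangle_perp.
- exact: lt_top.
- by move=> HA; split; [apply: perp_lt | apply: lt_perp].
- move=> HA HB; split; first by move=> H; apply: lt_top; apply: perp_lt.
  exact: top_perp.
Qed.
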